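(* For every $n\ge1$ there is a bijection $\sigma\mapsto\sigma'$ from $\mathcal{X}_{2n}$ onto $\mathcal{R}_{2n}$ such that $\mathrm{drop}(\sigma')=\mathrm{des}(\sigma)$. In particular $|\mathcal{X}_{2n}|=|\mathcal{R}_{2n}|$.
   Context: For $\sigma\in\mathfrak{S}_m$ (permutations of $[m]$), a descent is an index $i$ with $\sigma_i>\sigma_{i+1}$ (descent pair $(\sigma_i,\sigma_{i+1})$), $\mathrm{des}(\sigma)$ is the number of descents; $\mathcal{X}_{2n}$ is the set of permutations of $[2n]$ whose every descent pair $(\sigma_i,\sigma_{i+1})$ has $\sigma_i$ even and $\sigma_{i+1}$ odd. A drop of $\sigma$ is a pair $(i,\sigma_i)$ with $i>\sigma_i$ ($i$ is the drop top, $\sigma_i$ the drop bottom); $\mathrm{drop}(\sigma)$ is the number of drops. A drop is even-odd if $i$ is even and $\sigma_i$ is odd. $\mathcal{R}_{2n}$ is the set of permutations of $[2n]$ all of whose drops are even-odd. *)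

(* Defs.v *)
From mathcomp Require Import all_boot all_fingroup.
Set Implicit Arguments. Unset Strict Implicit. Unset Printing Implicit Defensive.

(* Permutations of [m] = {1,...,m} are represented as s : {perm 'I_m},
   where the ordinal i : 'I_m stands for the integer i+1.  Hence the
   one-line word is sigma_{i+1} = (s i) + 1, for i = 0..m-1. *)

Definition pval (m : nat) (s : {perm 'I_m}) (i : 'I_m) : nat := (s i).+1.

Definition is_descent (m : nat) (s : {perm 'I_m}) (i : 'I_m) : bool :=
  match insub (i.+1) : option 'I_m with
  | Some j => pval s j < pval s i
  | None => false
  end.

Definition pdes (m : nat) (s : {perm 'I_m}) : nat := #|[set i | is_descent s i]|.

Definition inX (m : nat) (s : {perm 'I_m}) : bool :=
  [forall i : 'I_m, is_descent s i ==>
     match insub (i.+1) : option 'I_m with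
     | Some j => ~~ odd (pval s i) && odd (pval s j)
     | None => false
     end].

Definition is_drop (m : nat) (s : {perm 'I_m}) (i : 'I_m) : bool :=
  pval s i < i.+1.

Definition pdrop (m : nat) (s : {perm 'I_m}) : nat := #|[set i | is_drop s i]|.

Definition inR (m : nat) (s : {perm 'I_m}) : bool :=
  [forall i : 'I_m, is_drop s i ==> ~~ odd (i.+1) && odd (pval s i)].

(* Main.v *)
Require Import Defs.
From mathcomp Require Import all_boot all_fingroup.
Set Implicit Arguments. Unset Strict Implicit. Unset Printing Implicit Defensive.

Section Foata.
Variable m : nat.
Implicit Types (w : {perm 'I_m}).

Definition Mx w (i : nat) : nat := \max_(j < m | j <= i) w j.

Lemma Mx_ge w (i : nat) (j : 'I_m) : j <= i -> w j <= Mx w i.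
Proof. by move=> h; apply: (leq_bigmax_cond (P := fun j : 'I_m => j <= i)). Qed.

Lemma Mx_le w (i c : nat) : (forall j : 'I_m, j <= i -> w j <= c) -> Mx w i <= c.
Proof. by move=> h; apply/bigmax_leqP. Qed.

Lemma Mx_mono w (i i' : nat) : i <= i' -> Mx w i <= Mx w i'.
Proof. by move=> h; apply: Mx_le => j hj; apply: Mx_ge; apply: leq_trans h. Qed.

Lemma Mx_attain w (i : 'I_m) :
  exists k : 'I_m, [/\ k <= i, w k = Mx w i :> nat & Mx w k = w k].
Proof.
have h0 : 0 < #|[pred j : 'I_m | j <= i]|.
  by apply/card_gt0P; exists i; rewrite inE.
have [k Hk Ek] := eq_bigmax_cond (fun j : 'I_m => val (w j)) h0.
rewrite inE in Hk.
have EM : Mx w i = \max_(i0 in [pred j : 'I_m | j <= i]) val (w i0).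
  by apply: eq_bigl => j; rewrite inE.
have E1 : w k = Mx w i :> nat by rewrite EM Ek.
exists k; split => //.
apply/eqP; rewrite eqn_leq Mx_ge // andbT.
apply: Mx_le => j hj. rewrite E1. apply: Mx_ge. exact: leq_trans hj Hk.
Qed.

Lemma Mx_lt w (i : 'I_m) : Mx w i < m.
Proof. by have [k [_ <- _]] := Mx_attain w i. Qed.

Lemma Mx_pref w w' (i : nat) : (forall j : 'I_m, j <= i -> w j = w' j) -> Mx w i = Mx w' i.
Proof. by move=> h; apply: eq_bigr => j hj; rewrite h. Qed.

Definition hh w (i : 'I_m) : 'I_m :=
  match insub i.+1 : option 'I_m with
  | Some j => if w j < Mx w i then w j else insubd i (Mx w i)
  | None => insubd i (Mx w i)
  end.

Lemma val_insubdM w (i : 'I_m) : val (insubd i (Mx w i)) = Mx w i.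
Proof. by rewrite val_insubd Mx_lt. Qed.

Lemma hhP w (i : 'I_m) :
  (exists2 j : 'I_m, val j = i.+1 & w j < Mx w i /\ hh w i = w j) \/
  ((forall j : 'I_m, val j = i.+1 -> Mx w i <= w j) /\ val (hh w i) = Mx w i).
Proof.
rewrite /hh; case: insubP => [j _ Ej | Hn].
  case: ifP => H; first by left; exists j.
  right; split; last exact: val_insubdM.
  move=> j' Ej'; have -> : j' = j by apply: val_inj; rewrite Ej Ej'.
  by rewrite leqNgt H.
right; split; last exact: val_insubdM.
by move=> j' Ej'; move: Hn; rewrite -Ej' ltn_ord.
Qed.

Lemma Mx_t1 w (i j : 'I_m) : val j = i.+1 -> w j < Mx w i -> Mx w j = Mx w i.
Proof.
move=> Ej H; apply/eqP; rewrite eqn_leq andbC Mx_mono /=; last by rewrite Ej.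
apply: Mx_le => q; rewrite Ej leq_eqVlt ltnS => /orP[/eqP Eq|Hq].
  have -> : q = j by apply: val_inj => /=; rewrite Eq Ej.
  exact: ltnW.
exact: Mx_ge.
Qed.

Lemma mix w (i i' j : 'I_m) : val j = i.+1 -> w j < Mx w i -> val (w j) = Mx w i' -> False.
Proof.
move=> Ej H E.
have [k [Hk Ek Mk]] := Mx_attain w i'.
have wjk : w j = w k by apply: val_inj; rewrite /= Ek E.
have jk := perm_inj wjk; subst k.
have : Mx w i <= Mx w j by apply: Mx_mono; rewrite Ej.
by rewrite Mk leqNgt H.
Qed.

Lemma t2_lt w (i i' : 'I_m) : i < i' -> (forall j : 'I_m, val j = i.+1 -> Mx w i <= w j) ->
  Mx w i < Mx w i'.
Proof.
move=> Hii' Hn.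
have Hj : i.+1 < m by apply: leq_ltn_trans Hii' (ltn_ord _).
pose j := Ordinal Hj.
have H1 := Hn j erefl.
have [k [Hk Ek _]] := Mx_attain w i.
have Hne : w j != w k.
  apply/negP => /eqP /perm_inj jk. by move: Hk; rewrite -jk /= ltnn.
have H2 : Mx w i < w j by rewrite ltn_neqAle H1 andbT -Ek; rewrite eq_sym.
apply: leq_trans H2 _; apply: Mx_ge => /=; exact: Hii'.
Qed.

Lemma hh_inj w : injective (hh w).
Proof.
move=> i i' E.
case: (hhP w i) => [[j Ej [Hj Hh]] | [Hn Hv]];
  case: (hhP w i') => [[j' Ej' [Hj' Hh']] | [Hn' Hv']].
- rewrite Hh Hh' in E; have jj := perm_inj E.
  by apply: val_inj; apply/eqP; rewrite -eqSS -Ej -Ej' jj.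
- exfalso; apply: (mix Ej Hj (i' := i')); by rewrite -Hh E.
- exfalso; apply: (mix Ej' Hj' (i' := i)); by rewrite -Hh' -E.
- have Emx : Mx w i = Mx w i' by rewrite -Hv -Hv' E.
  case: (ltngtP i i') => H.
  + by have := t2_lt H Hn; rewrite Emx ltnn.
  + by have := t2_lt H Hn'; rewrite Emx ltnn.
  + exact: val_inj.
Qed.

Definition G w : {perm 'I_m} := (w^-1 * perm (@hh_inj w))%g.

Lemma G_w w (i : 'I_m) : G w (w i) = hh w i.
Proof. by rewrite /G permM permK permE. Qed.

Lemma desc_drop w (i : 'I_m) : is_drop (G w) (w i) = is_descent w i.
Proof.
rewrite /is_descent /is_drop /Defs.pval G_w /hh ltnS; case: insubP => [j _ Ej|Hn] /=.
  case: ifP => H //.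
  rewrite val_insubdM ltnS ltnNge Mx_ge //.
  apply/esym/negbTE; apply/negP => Hd.
  by move: H; rewrite (leq_trans Hd) // Mx_ge.
by rewrite val_insubdM ltnNge Mx_ge.
Qed.

Lemma clause w (i : 'I_m) :
  (is_drop (G w) (w i) ==> ~~ odd (w i).+1 && odd (Defs.pval (G w) (w i))) =
  (is_descent w i ==> match insub (i.+1) : option 'I_m with
     | Some j => ~~ odd (Defs.pval w i) && odd (Defs.pval w j)
     | None => false end).
Proof.
rewrite desc_drop.
case Hd: (is_descent w i) => //=.
move: Hd; rewrite /is_descent /Defs.pval G_w /hh; case: insubP => [j _ Ej|Hn] //=.
case: ifP => H //; rewrite ltnS => Hd.
by move: H; rewrite (leq_trans Hd) // Mx_ge.
Qed.

Lemma inXR w : inR (G w) = inX w.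
Proof.
rewrite /inR /inX; apply/forallP/forallP => H x.
  by rewrite -clause; apply: H.
by rewrite -(permKV w x) clause; apply: H.
Qed.

Lemma drop_des w : pdrop (G w) = pdes w.
Proof.
rewrite /pdrop /pdes -(card_preimset _ (@perm_inj _ w)).
by apply: eq_card => i; rewrite !inE desc_drop.
Qed.

Definition S w (x : 'I_m) := Mx w ((w^-1)%g x).

Lemma S_ge w (x : 'I_m) : x <= S w x.
Proof. by rewrite /S; have := Mx_ge w (leqnn ((w^-1)%g x)); rewrite permKV. Qed.

Lemma S_G w (i : 'I_m) : S w (G w (w i)) = Mx w i.
Proof.
rewrite G_w; case: (hhP w i) => [[j Ej [Hj ->]] | [Hn Hv]].
  by rewrite /S permK; apply: Mx_t1.
have [k [Hk Ek Mk]] := Mx_attain w i.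
have -> : hh w i = w k by apply: val_inj; rewrite Hv; exact: (esym Ek).
by rewrite /S permK Mk.
Qed.

Lemma S_iter w n x : S w (iter n (G w) x) = S w x.
Proof.
elim: n => [//|n IH] /=.
by rewrite -(permKV w (iter n (G w) x)) S_G -IH.
Qed.

Lemma reach w d (i : 'I_m) : m - i <= d -> exists n, val (iter n (G w) (w i)) = Mx w i.
Proof.
elim: d i => [|d IH] i Hd.
  by move: Hd; rewrite leqn0 subn_eq0 leqNgt ltn_ord.
case: (hhP w i) => [[j Ej [Hj Hh]] | [Hn Hv]].
  have Hd' : m - j <= d by rewrite Ej subnS; move: Hd; case: (m - i).
  have [n Hn] := IH j Hd'.
  by exists n.+1; rewrite iterSr G_w Hh Hn (Mx_t1 Ej Hj).
by exists 1; rewrite /= G_w.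
Qed.

Lemma LR w w' (p : 'I_m) : G w = G w' ->
  (forall q : 'I_m, q < p -> w q = w' q) ->
  (forall q : 'I_m, q < p -> w q < w p) ->
  ~ (w p < w' p).
Proof.
move=> E Hpre HL Hlt.
pose j := (w'^-1)%g (w p).
have Ej : w' j = w p by rewrite permKV.
have Hpj : p < j.
  case: (ltngtP j p) => H.
  - have := Hpre j H; rewrite Ej => /perm_inj jp.
    by move: H; rewrite jp ltnn.
  - done.
  - have jp : j = p by apply: val_inj.
    by move: Hlt; rewrite -{2}jp Ej ltnn.
have [n Hn] := reach w' (leqnn (m - j)).
have Mp : Mx w p = w p.
  apply/eqP; rewrite eqn_leq Mx_ge // andbT.
  apply: Mx_le => q; rewrite leq_eqVlt => /orP[/eqP Eq|Hq].
    by have -> : q = p by apply: val_inj.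
  exact: ltnW (HL q Hq).
have HS : S w (iter n (G w') (w' j)) = w p.
  by rewrite -E Ej S_iter /S permK Mp.
have := S_ge w (iter n (G w') (w' j)); rewrite HS Hn.
have : w' p <= Mx w' j by apply: Mx_ge; apply: ltnW.
move=> H1 H2.
by move: (leq_trans (leq_trans Hlt H1) H2); rewrite ltnn.
Qed.

Lemma G_inj : injective G.
Proof.
move=> w w' E.
have step : forall p : 'I_m, (forall q : 'I_m, q < p -> w q = w' q) -> w p = w' p.
  move=> p Hpre.
  have Hpre' : forall q : 'I_m, q < p -> w' q = w q by move=> q Hq; rewrite Hpre.
  have fin : (forall q : 'I_m, q < p -> w q < w p) ->
             (forall q : 'I_m, q < p -> w' q < w' p) -> w p = w' p.
    move=> HL HL'; apply: val_inj; apply/eqP; rewrite eqn_leq.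
    have h1 := LR E Hpre HL; have h2 := LR (esym E) Hpre' HL'.
    by apply/andP; split; rewrite leqNgt; apply/negP.
  case Ep: (val p) => [|p'].
    by apply: fin => q; rewrite Ep.
  have Hp' : p' < m by have := ltn_ord p; rewrite Ep => /ltnW.
  pose i := Ordinal Hp'.
  have Hi : w i = w' i by apply: Hpre; rewrite Ep /=.
  have HM : Mx w i = Mx w' i.
    by apply: Mx_pref => q Hq; apply: Hpre; rewrite Ep ltnS.
  have Gw := G_w w i; have Gw' := G_w w' i.
  rewrite -Hi -E in Gw'.
  case: (hhP w i) => [[j Ej [Hj Hh]] | [Hn Hv]];
    case: (hhP w' i) => [[j' Ej' [Hj' Hh']] | [Hn' Hv']].
  - have jp : j = p by apply: val_inj; rewrite /= Ej Ep.
    have jp' : j' = p by apply: val_inj; rewrite /= Ej' Ep.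
    subst j j'; by rewrite -Gw Gw' Hh' in Hh.
  - exfalso; by move: Hj; rewrite -Hh -Gw Gw' Hv' -HM ltnn.
  - exfalso; by move: Hj'; rewrite -Hh' -Gw' Gw Hv HM ltnn.
  - have pj : val p = i.+1 by rewrite Ep.
    have Hle := Hn p pj; have Hle' := Hn' p pj.
    apply: fin => q; rewrite Ep ltnS => Hq.
      rewrite ltn_neqAle (leq_trans (Mx_ge w Hq) Hle) andbT.
      apply/negP => /eqP E'; have qp := perm_inj (val_inj E'); by move: Hq; rewrite qp Ep ltnn.
    rewrite ltn_neqAle (leq_trans (Mx_ge w' Hq) Hle') andbT.
    apply/negP => /eqP E'; have qp := perm_inj (val_inj E'); by move: Hq; rewrite qp Ep ltnn.
have all : forall p : nat, forall q : 'I_m, q < p -> w q = w' q.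
  elim=> [//|p IH] q; rewrite ltnS leq_eqVlt => /orP[/eqP Eq|Hq]; last exact: IH.
  by apply: step => r; rewrite Eq; apply: IH.
apply/permP => q; exact: (all q.+1).
Qed.

End Foata.

Theorem mainTheorem5 (n : nat) (hn : 1 <= n) :
  (exists f : {perm 'I_(2 * n)%N} -> {perm 'I_(2 * n)%N},
     {in [pred s | inX s] &, injective f} /\
     (forall s, inX s -> inR (f s)) /\
     (forall t, inR t -> exists2 s, inX s & f s = t) /\
     (forall s, inX s -> pdrop (f s) = pdes s)) /\
  #|[pred s : {perm 'I_(2 * n)%N} | inX s]| = #|[pred s : {perm 'I_(2 * n)%N} | inR s]|.
Proof.
have [Gi GK KG] := injF_bij (@G_inj (2 * n)).
split.
  exists (@G (2 * n)); split; first by move=> s t _ _; apply: G_inj.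
  split; first by move=> s; rewrite inXR.
  split; first by move=> t Ht; exists (Gi t); rewrite ?KG // -inXR KG.
  by move=> s _; apply: drop_des.
have : #|[set s : {perm 'I_(2 * n)%N} | inX s]| = #|[set s : {perm 'I_(2 * n)%N} | inR s]|.
  rewrite -[X in _ = X](card_preimset _ (@G_inj (2 * n))).
  by apply: eq_card => s; rewrite !inE inXR.
by rewrite !cardsE.
Qed.
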